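(* For every $n\ge 3$, \[ \max\{\rho(\mathsf{C}_n),1\} = \max\{\rho(\mathsf{SC}_n),1\}, \] where $\mathsf{C}_n$ is the compacted matrix of rank $n$ and $\mathsf{SC}_n$ is the super compacted matrix of rank $n$.
   Context: $\rho(M)$ is the spectral radius. The compacted matrix of rank $n$ is the $(2n-1)\times(2n-1)$ matrix $\mathsf{C}_n=(c_{ij})$ with: $c_{ij}=1$ if $j=i+1$ and $1\le i\le n-3$; $c_{ij}=1$ if $i=n-2$ and $j\in\{n-1,n\}$; $c_{ij}=n-2$ if $i=n-1$ and $1\le j\le n$; $c_{ij}=n-1$ if $i=n-1$ and $n+1\le j\le 2n-1$; $c_{nj}=1$ for all $j$; $c_{ij}=n-1$ if $i=n+1$ and $1\le j\le n-1$; $c_{ij}=n-2$ if $i=n+1$ and $n\le j\le 2n-1$; $c_{ij}=1$ if $i=n+2$ and $j\in\{n,n+1\}$; $c_{ij}=1$ if $j=i-1$ and $n+3\le i\le 2n-1$; $c_{ij}=0$ otherwise. The super compacted matrix of rank $n$ is the $n\times n$ matrix $\mathsf{SC}_n=(s_{ij})$ with: $s_{ij}=1$ if ($i\le n-2$ and $j=i+1$) or $i=n$; $s_{ij}=2$ if $i=n-2$ and $j=n$; $s_{ij}=2n-3$ if $i=n-1$ and $j<n$; $s_{ij}=2n-4$ if $i=n-1$ and $j=n$; $s_{ij}=0$ otherwise. *)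

(* Defs.v *)
From HB Require Import structures.
From mathcomp Require Import all_boot all_order all_algebra.
From mathcomp Require Import algC.
Set Implicit Arguments. Unset Strict Implicit. Unset Printing Implicit Defensive.
Import Order.TTheory GRing.Theory Num.Theory.

(* Complex eigenvalues (with multiplicity) of a square matrix over algC:
   the roots of its characteristic polynomial. *)
Local Open Scope ring_scope.
Definition eigenvalues_seq (m : nat) (A : 'M[algC]_m) : seq algC :=
  sval (closed_field_poly_normal (char_poly A)).

Definition spectral_radius (m : nat) (A : 'M[algC]_m) : algC :=
  \big[Num.max/0]_(z <- eigenvalues_seq A) `|z|.
Local Close Scope ring_scope.

(* Entries of the compacted matrix, with 1-based indices i j. *)
Definition compacted_entry (n i j : nat) : nat :=
  if (1 <= i <= n - 3)%N then (if j == i.+1 then 1 else 0)%N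
  else if i == (n - 2)%N then (if (j == n - 1) || (j == n) then 1 else 0)%N
  else if i == (n - 1)%N then
    (if (1 <= j <= n)%N then n - 2 else if (n + 1 <= j <= 2 * n - 1)%N then n - 1 else 0)%N
  else if i == n then 1%N
  else if i == n.+1 then
    (if (1 <= j <= n - 1)%N then n - 1 else if (n <= j <= 2 * n - 1)%N then n - 2 else 0)%N
  else if i == n.+2 then (if (j == n) || (j == n.+1) then 1 else 0)%N
  else if (n + 3 <= i <= 2 * n - 1)%N then (if j == i.-1 then 1 else 0)%N
  else 0%N.

Definition compacted (n : nat) : 'M[algC]_(2 * n - 1) :=
  (\matrix_(i, j) (compacted_entry n i.+1 j.+1)%:R)%R.

(* Entries of the super compacted matrix, with 1-based indices i j. *)
Definition super_compacted_entry (n i j : nat) : nat :=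
  if ((i <= n - 2)%N && (j == i.+1)) || (i == n) then 1%N
  else if (i == n - 2) && (j == n) then 2%N
  else if (i == n - 1) && (j < n)%N then (2 * n - 3)%N
  else if (i == n - 1) && (j == n) then (2 * n - 4)%N
  else 0%N.

Definition super_compacted (n : nat) : 'M[algC]_n :=
  (\matrix_(i, j) (super_compacted_entry n i.+1 j.+1)%:R)%R.

(* Main.v *)
Require Import Defs.
From HB Require Import structures.
From mathcomp Require Import all_boot all_order all_algebra.
From mathcomp Require Import algC.
From mathcomp Require Import zify ring.
From Stdlib Require Import Classical.
Import Order.TTheory GRing.Theory Num.Theory.
Local Open Scope ring_scope.

Lemma cp_tr m (A : 'M[algC]_m) : char_poly A^T = char_poly A.
Proof.
rewrite /char_poly -det_tr; congr (\det _); apply/matrixP => i j.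
by rewrite !mxE eq_sym.
Qed.

Lemma mem_eig m (A : 'M[algC]_m) z :
  (z \in eigenvalues_seq A) = root (char_poly A) z.
Proof.
rewrite /eigenvalues_seq; case: closed_field_poly_normal => r /= ->.
by rewrite (monicP (char_poly_monic A)) scale1r root_prod_XsubC.
Qed.

Lemma eig_vec m (A : 'M[algC]_m) z : z \in eigenvalues_seq A ->
  exists2 v : 'rV_m, (forall i, \sum_j A i j * v 0 j = z * v 0 i) & v != 0.
Proof.
rewrite mem_eig -cp_tr -eigenvalue_root_char => /eigenvalueP [v Hv nz].
exists v => // i; move/matrixP: Hv => /(_ 0 i); rewrite !mxE => <-.
by apply: eq_bigr => j _; rewrite mxE mulrC.
Qed.

Lemma vec_eig m (A : 'M[algC]_m) z (v : 'rV_m) : v != 0 ->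
  (forall i, \sum_j A i j * v 0 j = z * v 0 i) -> z \in eigenvalues_seq A.
Proof.
move=> nz H; rewrite mem_eig -cp_tr -eigenvalue_root_char.
apply/eigenvalueP; exists v => //; apply/matrixP => k i.
rewrite (ord1 k) !mxE -H; apply: eq_bigr => j _; by rewrite mxE mulrC.
Qed.

Lemma max_cases (x y : algC) : Num.max x y = x \/ Num.max x y = y.
Proof. rewrite /Num.max /Order.max; case: ifP; auto. Qed.

Lemma rho_ge0 m (A : 'M[algC]_m) : 0 <= spectral_radius A.
Proof.
rewrite /spectral_radius; apply: (big_ind (fun x : algC => 0 <= x)) => //.
  by move=> x y hx hy; case: (max_cases x y) => ->.
Qed.

Lemma rho_le m (A : 'M[algC]_m) b : 0 <= b ->
  (forall z, z \in eigenvalues_seq A -> `|z| <= b) -> spectral_radius A <= b.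
Proof.
move=> b0 H; rewrite /spectral_radius big_seq; apply: (big_ind (fun x : algC => x <= b)) => //.
by move=> x y hx hy; case: (max_cases x y) => ->.
Qed.

Lemma rho_ge m (A : 'M[algC]_m) z : z \in eigenvalues_seq A -> `|z| <= spectral_radius A.
Proof.
rewrite /spectral_radius; elim: (eigenvalues_seq A) => // a s IH.
rewrite inE big_cons => /orP [/eqP -> | /IH h].
  have r1 : `|a| \is Num.real by apply: ger0_real.
  have r2 : (\big[Num.max/0]_(j <- s) `|j|) \is Num.real.
    apply: ger0_real; apply: (big_ind (fun x : algC => 0 <= x)) => //.
    by move=> x y hx hy; case: (max_cases x y) => ->.
  by case: (real_leP r1 r2).
have r1 : `|a| \is Num.real by apply: ger0_real.
have r2 : (\big[Num.max/0]_(j <- s) `|j|) \is Num.real.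
  apply: ger0_real; apply: (big_ind (fun x : algC => 0 <= x)) => //.
  by move=> x y hx hy; case: (max_cases x y) => ->.
by case: (real_leP r1 r2) => // /ltW; apply: le_trans.
Qed.

Lemma max1_le m1 m2 (A : 'M[algC]_m1) (B : 'M[algC]_m2) :
  (forall z, z \in eigenvalues_seq A -> `|z| <= 1 \/ z \in eigenvalues_seq B) ->
  Num.max (spectral_radius A) 1 <= Num.max (spectral_radius B) 1.
Proof.
move=> H.
have rB : spectral_radius B \is Num.real by apply: ger0_real; apply: rho_ge0.
have rA : spectral_radius A \is Num.real by apply: ger0_real; apply: rho_ge0.
have r1 : (1 : algC) \is Num.real by [].
have hB1 : 1 <= Num.max (spectral_radius B) 1 by case: (real_leP rB r1) => // /ltW.
have hB2 : spectral_radius B <= Num.max (spectral_radius B) 1 by case: (real_leP rB r1).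
have hA : spectral_radius A <= Num.max (spectral_radius B) 1.
  apply: rho_le; first by apply: le_trans hB1.
  move=> z /H [h|h]; first by apply: le_trans hB1.
  by apply: le_trans hB2; apply: rho_ge.
by case: (real_leP rA r1).
Qed.

Definition Cs n (f : nat -> algC) i :=
  \sum_(1 <= j < 2*n) (compacted_entry n i j)%:R * f j.
Definition SCs n (f : nat -> algC) i :=
  \sum_(1 <= j < n.+1) (super_compacted_entry n i j)%:R * f j.

Lemma sum_delta a b k (F : nat -> algC) : (a <= k < b)%N ->
  \sum_(a <= j < b) ((j == k)%:R * F j) = F k.
Proof.
move=> hk; rewrite (@big_cat_nat _ _ _ k) //=; try lia.
rewrite [X in _ + X]big_ltn; last lia.
rewrite eqxx mul1r big_nat_cond big1 ?add0r; last first.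
  move=> j /andP[/andP[_ H] _]; rewrite (ltn_eqF H) mul0r //.
rewrite big_nat_cond big1 ?addr0 //.
move=> j /andP[/andP[H _] _]; have -> : (j == k) = false by lia.
by rewrite mul0r.
Qed.

Lemma sum_const a b c (E : nat -> nat) (F : nat -> algC) :
  (forall j, (a <= j < b)%N -> E j = c) ->
  \sum_(a <= j < b) ((E j)%:R * F j) = c%:R * \sum_(a <= j < b) F j.
Proof.
move=> H; rewrite mulr_sumr; apply: eq_big_nat => j hj; by rewrite H.
Qed.

Ltac ent := rewrite /compacted_entry /super_compacted_entry;
  repeat (case: ifP => ?); repeat (case: eqP => ?); lia.

Section Rows.
Variables (n : nat) (f : nat -> algC).
Hypothesis hn : (3 <= n)%N.

Lemma Cs_a i : (1 <= i <= n - 3)%N -> Cs n f i = f i.+1.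
Proof.
move=> hi; rewrite /Cs -(@sum_delta 1 (2*n) _ f); last lia.
by apply: eq_big_nat => j hj; congr (_%:R * _); ent.
Qed.

Lemma Cs_b : Cs n f (n - 2) = f (n - 1) + f n.
Proof.
rewrite /Cs -(@sum_delta 1 (2*n) (n - 1) f); last lia.
rewrite -(@sum_delta 1 (2*n) (n) f); last lia.
rewrite -big_split; apply: eq_big_nat => j hj /=.
rewrite -mulrDl -natrD; congr (_%:R * _); ent.
Qed.

Lemma Cs_c : Cs n f (n - 1) =
  (n - 2)%:R * (\sum_(1 <= j < n) f j + f n) + (n - 1)%:R * \sum_(n.+1 <= j < 2 * n) f j.
Proof.
rewrite /Cs (@big_cat_nat _ _ _ n.+1) //=; try lia.
rewrite (@sum_const 1 n.+1 (n-2)); last by move=> j hj; ent.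
rewrite (@sum_const n.+1 (2*n) (n-1)); last by move=> j hj; ent.
by rewrite big_nat_recr //=; lia.
Qed.

Lemma Cs_d : Cs n f n =
  \sum_(1 <= j < n) f j + f n + \sum_(n.+1 <= j < 2 * n) f j.
Proof.
rewrite /Cs (@big_cat_nat _ _ _ n.+1) //=; try lia.
rewrite (@sum_const 1 n.+1 1); last by move=> j hj; ent.
rewrite (@sum_const n.+1 (2*n) 1); last by move=> j hj; ent.
by rewrite !mul1r big_nat_recr //=; lia.
Qed.

Lemma Cs_e : Cs n f n.+1 =
  (n - 1)%:R * \sum_(1 <= j < n) f j + (n - 2)%:R * (f n + \sum_(n.+1 <= j < 2 * n) f j).
Proof.
rewrite /Cs (@big_cat_nat _ _ _ n) //=; try lia.
rewrite (@sum_const 1 n (n-1)); last by move=> j hj; ent.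
rewrite (@sum_const n (2*n) (n-2)); last by move=> j hj; ent.
by rewrite [X in _ + _ * X = _]big_ltn //=; lia.
Qed.

Lemma Cs_f : Cs n f n.+2 = f n + f n.+1.
Proof.
rewrite /Cs -(@sum_delta 1 (2*n) (n) f); last lia.
rewrite -(@sum_delta 1 (2*n) (n.+1) f); last lia.
rewrite -big_split; apply: eq_big_nat => j hj /=.
rewrite -mulrDl -natrD; congr (_%:R * _); ent.
Qed.

Lemma Cs_g i : (n + 3 <= i <= 2 * n - 1)%N -> Cs n f i = f i.-1.
Proof.
move=> hi; rewrite /Cs -(@sum_delta 1 (2*n) _ f); last lia.
by apply: eq_big_nat => j hj; congr (_%:R * _); ent.
Qed.

Lemma SCs_a i : (1 <= i <= n - 3)%N -> SCs n f i = f i.+1.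
Proof.
move=> hi; rewrite /SCs -(@sum_delta 1 (n.+1) _ f); last lia.
by apply: eq_big_nat => j hj; congr (_%:R * _); ent.
Qed.

Lemma SCs_b : SCs n f (n - 2) = f (n - 1) + 2%:R * f n.
Proof.
rewrite /SCs -(@sum_delta 1 (n.+1) (n - 1) f); last lia.
rewrite -(@sum_delta 1 (n.+1) (n) f); last lia.
rewrite mulr_sumr -big_split; apply: eq_big_nat => j hj /=.
rewrite mulrA -natrM -mulrDl -natrD; congr (_%:R * _); ent.
Qed.

Lemma SCs_c : SCs n f (n - 1) =
  (2 * n - 3)%:R * \sum_(1 <= j < n) f j + (2 * n - 4)%:R * f n.
Proof.
rewrite /SCs big_nat_recr /=; last lia.
rewrite (@sum_const 1 n (2*n-3)); last by move=> j hj; ent.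
congr (_ + _); congr (_%:R * _); ent.
Qed.

Lemma SCs_d : SCs n f n = \sum_(1 <= j < n) f j + f n.
Proof.
rewrite /SCs big_nat_recr /=; last lia.
rewrite (@sum_const 1 n 1) ?mul1r; last by move=> j hj; ent.
have -> : super_compacted_entry n n n = 1%N by ent.
by rewrite mul1r.
Qed.

End Rows.

Lemma rev_sum n (g : nat -> algC) :
  \sum_(1 <= j < n) g (2 * n - j)%N = \sum_(n.+1 <= j < 2 * n) g j.
Proof.
rewrite big_nat_rev.
have -> : n.+1 = (1 + n)%N by lia.
rewrite big_addn; have -> : (2 * n - n = n)%N by lia.
apply: eq_big_nat => j hj; congr g; lia.
Qed.

Definition red n (f : nat -> algC) k := if (k < n)%N then f k + f (2 * n - k)%N else f n.
Definition ext n (u : nat -> algC) k :=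
  if (k < n)%N then u k else if k == n then 2%:R * u n else u (2 * n - k)%N.

Lemma fwd n f z : (3 <= n)%N -> (exists k, (1 <= k <= 2 * n - 1)%N /\ f k != 0) ->
  (forall i, (1 <= i <= 2 * n - 1)%N -> Cs n f i = z * f i) ->
  `|z| <= 1 \/ exists u, (exists k, (1 <= k <= n)%N /\ u k != 0) /\
     forall i, (1 <= i <= n)%N -> SCs n u i = z * u i.
Proof.
move=> hn [k0 [hk0 fk0]] H.
have ha i : (1 <= i <= n - 3)%N -> f i.+1 = z * f i.
  by move=> hi; rewrite -(@Cs_a n f hn i hi) H //; lia.
have hg i : (n + 3 <= i <= 2 * n - 1)%N -> f i.-1 = z * f i.
  by move=> hi; rewrite -(@Cs_g n f hn i hi) H //; lia.
have hb : f (n - 1)%N + f n = z * f (n - 2)%N.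
  by rewrite -(@Cs_b n f hn) H //; lia.
have hc := @Cs_c n f hn; rewrite H in hc; last lia.
have hd := @Cs_d n f hn; rewrite H in hd; last lia.
have he := @Cs_e n f hn; rewrite H in he; last lia.
have hf := @Cs_f n f hn; rewrite H in hf; last lia.
set A := \sum_(1 <= j < n) f j in hc hd he.
set B := \sum_(n.+1 <= j < 2 * n) f j in hc hd he.
case: (classic (exists k, (1 <= k <= n)%N /\ red n f k != 0)) => [ex|nex].
  right; exists (red n f); split => // i hi.
  case: (leqP i (n - 3)) => h1.
    rewrite SCs_a //; last lia.
    rewrite /red ifT; last lia. rewrite ifT; last lia.
    rewrite ha; last lia.
    have := hg (2 * n - i)%N; rewrite (_ : (2 * n - i).-1 = 2 * n - i.+1)%N; last lia.
    move=> ->; last lia. by rewrite mulrDr.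
  have : (i = n - 2 \/ i = n - 1 \/ i = n)%N by lia.
  case=> [->|[->|->]].
  - rewrite SCs_b // /red ifT; last lia. rewrite ifF; last lia. rewrite ifT; last lia.
    rewrite (_ : (2 * n - (n - 1) = n.+1)%N); last lia.
    rewrite (_ : (2 * n - (n - 2) = n.+2)%N); last lia.
    rewrite mulrDr -hb hf; ring.
  - rewrite SCs_c // /red ifF; last lia. rewrite ifT; last lia.
    rewrite (_ : (2 * n - (n - 1) = n.+1)%N); last lia.
    rewrite (eq_big_nat _ _ (F2 := fun j => f j + f (2 * n - j)%N)); last first.
      by move=> j hj; rewrite ifT //; lia.
    rewrite big_split /= rev_sum -/A -/B [in RHS]mulrDr hc he.
    rewrite (_ : (2 * n - 3 = (n - 2) + (n - 1))%N); last lia.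
    rewrite (_ : (2 * n - 4 = (n - 2) + (n - 2))%N); last lia.
    rewrite !natrD; ring.
  - rewrite SCs_d // /red ltnn.
    rewrite (eq_big_nat _ _ (F2 := fun j => f j + f (2 * n - j)%N)); last first.
      by move=> j hj; rewrite ifT //; lia.
    rewrite big_split /= rev_sum -/A -/B hd; ring.
left.
have hu k : (1 <= k <= n)%N -> red n f k = 0.
  move=> hk; case: (eqVneq (red n f k) 0) => // nz; exfalso; apply: nex; by exists k.
have fn0 : f n = 0 by have := hu n; rewrite /red ltnn; apply; lia.
have fr k : (1 <= k < n)%N -> f (2 * n - k)%N = - f k.
  move=> hk; have := hu k; rewrite /red ifT; last lia.
  move=> h; apply/eqP; rewrite -addr_eq0 addrC h //; lia.
have geo k : (k.+1 <= n - 1)%N -> f k.+1 = z ^+ k * f 1%N.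
  elim: k => [|k IH] hk; first by rewrite expr0 mul1r.
  case: (leqP k.+1 (n - 3)) => h.
    by rewrite ha ?IH ?exprS ?mulrA //; lia.
  have ek : (k.+2 = n - 1)%N by lia.
  have ek' : (k.+1 = n - 2)%N by lia.
  by rewrite ek -[f (n-1)%N]addr0 -fn0 hb -ek' IH ?exprS ?mulrA //; lia.
have hA : A = (\sum_(j < n.-1) z ^+ j) * f 1%N.
  rewrite /A big_add1 /= big_mkord mulr_suml; apply: eq_bigr => j _.
  apply: geo; have := ltn_ord j; lia.
have hB : B = - A.
  rewrite /B -rev_sum /A -sumrN; apply: eq_big_nat => j hj; apply: fr; lia.
have f1 : f 1%N != 0.
  apply: contraNneq fk0 => f10.
  have geo0 k : (1 <= k <= n - 1)%N -> f k = 0.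
    move=> hk; have -> : k = k.-1.+1 by lia.
    by rewrite geo ?f10 ?mulr0 //; lia.
  apply/eqP; case: (ltngtP k0 n) => h; first by apply: geo0; lia.
    have -> : k0 = (2 * n - (2 * n - k0))%N by lia.
    by rewrite fr ?geo0 ?oppr0 //; lia.
  by rewrite h.
have hn1 : f (n - 1)%N = z ^+ (n - 2) * f 1%N.
  have -> : (n - 1 = (n - 2).+1)%N by lia. by rewrite geo //; lia.
move: hc; rewrite fn0 addr0 hB hn1 hA.
rewrite (_ : (n - 1 = (n - 2) + 1)%N); last lia.
rewrite natrD => hc.
have hs : (\sum_(j < n) z ^+ j) * f 1%N = 0.
  have e : n.-1 = (n - 2).+1 by lia.
  rewrite e in hc.
  have -> : n = (n - 2).+2 by lia.
  rewrite big_ord_recr /= exprS mulrDl -mulrA hc; ring.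
move/eqP: hs; rewrite mulf_eq0 (negbTE f1) orbF => /eqP hs.
have zn : z ^+ n = 1 by apply/eqP; rewrite -subr_eq0 subrX1 hs mulr0.
have : `|z| ^+ n == 1 by rewrite -normrX zn normr1.
rewrite pexpr_eq1 //; last lia.
by move/eqP => ->.
Qed.

Lemma bwd n u z : (3 <= n)%N -> (exists k, (1 <= k <= n)%N /\ u k != 0) ->
  (forall i, (1 <= i <= n)%N -> SCs n u i = z * u i) ->
  exists f, (exists k, (1 <= k <= 2 * n - 1)%N /\ f k != 0) /\
     forall i, (1 <= i <= 2 * n - 1)%N -> Cs n f i = z * f i.
Proof.
move=> hn [k0 [hk0 uk0]] H.
have ha i : (1 <= i <= n - 3)%N -> u i.+1 = z * u i.
  by move=> hi; rewrite -(@SCs_a n u hn i hi) H //; lia.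
have hb := @SCs_b n u hn; rewrite H in hb; last lia.
have hc := @SCs_c n u hn; rewrite H in hc; last lia.
have hd := @SCs_d n u hn; rewrite H in hd; last lia.
set U := \sum_(1 <= j < n) u j in hc hd.
have e1 k : (k < n)%N -> ext n u k = u k by move=> hk; rewrite /ext hk.
have en : ext n u n = 2%:R * u n by rewrite /ext ltnn eqxx.
have e2 k : (n < k)%N -> ext n u k = u (2 * n - k)%N.
  by move=> hk; rewrite /ext ifF; [rewrite ifF //|]; lia.
have sA : \sum_(1 <= j < n) ext n u j = U.
  by apply: eq_big_nat => j hj; rewrite e1 //; lia.
have sB : \sum_(n.+1 <= j < 2 * n) ext n u j = U.
  rewrite -rev_sum; apply: eq_big_nat => j hj; rewrite e2; last lia.
  congr u; lia.
exists (ext n u); split.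
  case: (ltngtP k0 n) => h.
  - by exists k0; rewrite e1 //; split => //; lia.
  - lia.
  - exists n; rewrite en -h; split; first lia.
    by rewrite mulf_neq0 // pnatr_eq0.
move=> i hi.
case: (leqP i (n - 3)) => h1.
  rewrite Cs_a //; last lia. rewrite e1; last lia. rewrite e1; last lia. rewrite ha //; lia.
case: (leqP (n + 3) i) => h2.
  rewrite Cs_g //; last lia. rewrite !e2; try lia.
  rewrite (_ : (2 * n - i.-1 = (2 * n - i).+1)%N); last lia.
  rewrite ha //; lia.
have : (i = n - 2 \/ i = n - 1 \/ i = n \/ i = n.+1 \/ i = n.+2)%N by lia.
case=> [->|[->|[->|[->|->]]]].
- rewrite Cs_b // (e1 (n - 1)%N); last lia. rewrite (e1 (n - 2)%N); last lia. by rewrite en hb.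
- rewrite Cs_c // sA sB en e1; last lia. rewrite hc.
  rewrite (_ : (2 * n - 3 = (n - 2) + (n - 1))%N); last lia.
  rewrite (_ : (2 * n - 4 = (n - 2) + (n - 2))%N); last lia.
  rewrite !natrD; ring.
- rewrite Cs_d // sA sB en mulrA (mulrC z) -mulrA hd; ring.
- rewrite Cs_e // sA sB en e2; last lia.
  rewrite (_ : (2 * n - n.+1 = n - 1)%N); last lia. rewrite hc.
  rewrite (_ : (2 * n - 3 = (n - 2) + (n - 1))%N); last lia.
  rewrite (_ : (2 * n - 4 = (n - 2) + (n - 2))%N); last lia.
  rewrite !natrD; ring.
- rewrite Cs_f // en e2; last lia. rewrite e2; last lia.
  rewrite (_ : (2 * n - n.+1 = n - 1)%N); last lia.
  rewrite (_ : (2 * n - n.+2 = n - 2)%N); last lia.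
  rewrite hb; ring.
Qed.

Lemma sum_shift m p (G : nat -> algC) : p = m.+1 ->
  \sum_(j < m) G j.+1 = \sum_(1 <= j < p) G j.
Proof. by move=> ->; rewrite big_add1 /= big_mkord. Qed.

Lemma vec_to_f m (v : 'rV[algC]_m) : v != 0 ->
  exists f : nat -> algC, (forall j : 'I_m, f j.+1 = v 0 j) /\
    exists k, (1 <= k <= m)%N /\ f k != 0.
Proof.
move=> nz.
pose f k := if k is k'.+1 then (if (insub k' : option 'I_m) is Some j then v 0 j else 0) else 0.
have fE (j : 'I_m) : f j.+1 = v 0 j by rewrite /f valK.
exists f; split => //.
case: (pickP (fun j => v 0 j != 0)) => [j hj | h].
  exists j.+1; rewrite fE; split => //; have := ltn_ord j; lia.
exfalso; move/negP: nz; apply; apply/eqP/rowP => j; rewrite mxE.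
by move: (h j) => /negbFE /eqP.
Qed.

Lemma C_to_f n z : (3 <= n)%N -> z \in eigenvalues_seq (compacted n) ->
  exists f, (exists k, (1 <= k <= 2 * n - 1)%N /\ f k != 0) /\
     forall i, (1 <= i <= 2 * n - 1)%N -> Cs n f i = z * f i.
Proof.
move=> hn /eig_vec [v Hv nz].
have [f [fE nzf]] := @vec_to_f _ v nz.
exists f; split => // i hi.
have hi' : (i.-1 < 2 * n - 1)%N by lia.
have ei : i = i.-1.+1 by lia.
move: (Hv (Ordinal hi')).
rewrite /Cs -(@sum_shift (2 * n - 1)); last lia.
move=> Hi; rewrite (_ : f i = v 0 (Ordinal hi')); last by rewrite -fE /= -ei.
rewrite -Hi; apply: eq_bigr => j _.
by rewrite mxE fE /= -ei.
Qed.

Lemma SC_to_u n z : (3 <= n)%N -> z \in eigenvalues_seq (super_compacted n) ->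
  exists u, (exists k, (1 <= k <= n)%N /\ u k != 0) /\
     forall i, (1 <= i <= n)%N -> SCs n u i = z * u i.
Proof.
move=> hn /eig_vec [v Hv nz].
have [f [fE nzf]] := @vec_to_f _ v nz.
exists f; split => // i hi.
have hi' : (i.-1 < n)%N by lia.
have ei : i = i.-1.+1 by lia.
move: (Hv (Ordinal hi')).
rewrite /SCs -(@sum_shift n); last lia.
move=> Hi; rewrite (_ : f i = v 0 (Ordinal hi')); last by rewrite -fE /= -ei.
rewrite -Hi; apply: eq_bigr => j _.
by rewrite mxE fE /= -ei.
Qed.

Lemma f_to_vec m (f : nat -> algC) : (exists k, (1 <= k <= m)%N /\ f k != 0) ->
  (\row_(j < m) f j.+1) != 0.
Proof.
move=> [k [hk fk]]; apply/negP => /eqP /rowP h.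
have hk' : (k.-1 < m)%N by lia.
move: (h (Ordinal hk')); rewrite !mxE /= (_ : k.-1.+1 = k); last lia.
by move=> fk0; move: fk; rewrite fk0 eqxx.
Qed.

Lemma f_to_C n z f : (3 <= n)%N -> (exists k, (1 <= k <= 2 * n - 1)%N /\ f k != 0) ->
  (forall i, (1 <= i <= 2 * n - 1)%N -> Cs n f i = z * f i) ->
  z \in eigenvalues_seq (compacted n).
Proof.
move=> hn nz H; apply: (@vec_eig _ _ z _ (@f_to_vec _ f nz)) => i.
rewrite mxE -H; last by have := ltn_ord i; lia.
rewrite /Cs -(@sum_shift (2 * n - 1)); last lia.
by apply: eq_bigr => j _; rewrite !mxE.
Qed.

Lemma u_to_SC n z f : (3 <= n)%N -> (exists k, (1 <= k <= n)%N /\ f k != 0) ->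
  (forall i, (1 <= i <= n)%N -> SCs n f i = z * f i) ->
  z \in eigenvalues_seq (super_compacted n).
Proof.
move=> hn nz H; apply: (@vec_eig _ _ z _ (@f_to_vec _ f nz)) => i.
rewrite mxE -H; last by have := ltn_ord i; lia.
rewrite /SCs -(@sum_shift n) //.
by apply: eq_bigr => j _; rewrite !mxE.
Qed.

Theorem proposition5p1 (n : nat) (hn : (3 <= n)%N) :
  Num.max (spectral_radius (compacted n)) 1 =
  Num.max (spectral_radius (super_compacted n)) 1.
Proof.
apply/le_anti/andP; split; apply: max1_le => z hz.
  have [f [nz E]] := @C_to_f n z hn hz.
  case: (@fwd n f z hn nz E) => [h|[u [nzu Eu]]]; [by left | right].
  exact: (@u_to_SC n z u hn nzu Eu).
right; have [u [nz E]] := @SC_to_u n z hn hz.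
have [f [nzf Ef]] := @bwd n u z hn nz E.
exact: (@f_to_C n z f hn nzf Ef).
Qed.
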